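(* The cut rule is admissible: every sequent derivable using the rules (id), ($\land$), ($\lor$), ($\Box$), ($\Diamond$) and (cut) is derivable using only (id), ($\land$), ($\lor$), ($\Box$), ($\Diamond$).
   Context: Fix a countable set of atoms; each atom $\alpha$ has a dual negative atom $\alpha^\perp$. Formulas: $A,B ::= \alpha \mid \alpha^\perp \mid A\land B \mid A\lor B \mid \Box A \mid \Diamond A$. Negation $A^\perp$: $(\alpha)^\perp=\alpha^\perp$, $(\alpha^\perp)^\perp=\alpha$, $(A\land B)^\perp=A^\perp\lor B^\perp$, $(A\lor B)^\perp=A^\perp\land B^\perp$, $(\Box A)^\perp=\Diamond A^\perp$, $(\Diamond A)^\perp=\Box A^\perp$. A (nested) sequent is given by $\Gamma,\Delta ::= \cdot \mid \Gamma, A \mid \Gamma, [\Delta]$, where $\cdot$ is the empty sequent; sequents are taken up to exchange, and $\Gamma,\Delta$ denotes juxtaposition. A unary context is given by $\Gamma\{-\} ::= \Delta,\{-\} \mid \Delta,[\Gamma\{-\}]$; $\Gamma\{\Delta\}$ is the result of filling the hole with $\Delta$, and $\Gamma\{\}$ means $\Gamma\{\cdot\}$. Depth: $\mathrm{depth}(\Delta,\{-\})=0$, $\mathrm{depth}(\Delta,[\Gamma\{-\}])=\mathrm{depth}(\Gamma\{-\})+1$. Rules: (id) $\Gamma\{\alpha^\perp,\alpha\}$ with no premises ($\alpha$ an atom); ($\land$) from $\Gamma\{A\}$ and $\Gamma\{B\}$ infer $\Gamma\{A\land B\}$; ($\lor$) from $\Gamma\{A,B\}$ infer $\Gamma\{A\lor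 B\}$; ($\Box$) from $\Gamma\{[\Diamond A^\perp, A]\}$ infer $\Gamma\{\Box A\}$; ($\Diamond$) from $\Gamma\{\Delta\{A\},\Diamond A\}$ infer $\Gamma\{\Delta\{\},\Diamond A\}$, provided $\mathrm{depth}(\Delta\{-\})>0$; (cut) from $\Gamma\{A\}$ and $\Gamma\{A^\perp\}$ infer $\Gamma\{\}$. *)

(* Defs.v *)
From Stdlib Require Import List.
Import ListNotations.

Inductive form : Type :=
| Atom : nat -> form
| NAtom : nat -> form
| And : form -> form -> form
| Or : form -> form -> form
| Box : form -> form
| Dia : form -> form.

Fixpoint neg (A : form) : form :=
  match A with
  | Atom a => NAtom a
  | NAtom a => Atom a
  | And A B => Or (neg A) (neg B)
  | Or A B => And (neg A) (neg B)
  | Box A => Dia (neg A)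
  | Dia A => Box (neg A)
  end.

(* A nested sequent is a list of items: a formula or a bracketed sequent [Delta].
   The empty sequent is [], juxtaposition is list concatenation. *)
Inductive item : Type :=
| IF : form -> item
| IB : list item -> item.

Definition sequent := list item.

(* Unary contexts: Hole D is  D,{-} ; Nest D G is  D,[G{-}]. *)
Inductive ctx : Type :=
| Hole : sequent -> ctx
| Nest : sequent -> ctx -> ctx.

Fixpoint fill (G : ctx) (S : sequent) : sequent :=
  match G with
  | Hole D => D ++ S
  | Nest D G' => D ++ [IB (fill G' S)]
  end.

Fixpoint depth (G : ctx) : nat :=
  match G with
  | Hole _ => 0
  | Nest _ G' => S (depth G')
  end.

(* Sequents are taken up to exchange (at every nesting level):
   the least congruence containing permutation of adjacent items. *)
Inductive seq_equiv : sequent -> sequent -> Prop :=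
| se_nil : seq_equiv [] []
| se_skipF : forall A l l', seq_equiv l l' -> seq_equiv (IF A :: l) (IF A :: l')
| se_skipB : forall s s' l l', seq_equiv s s' -> seq_equiv l l' ->
    seq_equiv (IB s :: l) (IB s' :: l')
| se_swap : forall x y l, seq_equiv (x :: y :: l) (y :: x :: l)
| se_trans : forall l1 l2 l3, seq_equiv l1 l2 -> seq_equiv l2 l3 -> seq_equiv l1 l3.

Inductive derivable (withcut : bool) : sequent -> Prop :=
| r_exch : forall S S', derivable withcut S -> seq_equiv S S' -> derivable withcut S'
| r_id : forall (G : ctx) (a : nat),
    derivable withcut (fill G [IF (NAtom a); IF (Atom a)])
| r_and : forall G A B,
    derivable withcut (fill G [IF A]) -> derivable withcut (fill G [IF B]) ->
    derivable withcut (fill G [IF (And A B)])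
| r_or : forall G A B,
    derivable withcut (fill G [IF A; IF B]) ->
    derivable withcut (fill G [IF (Or A B)])
| r_box : forall G A,
    derivable withcut (fill G [IB [IF (Dia (neg A)); IF A]]) ->
    derivable withcut (fill G [IF (Box A)])
| r_dia : forall G D A, 0 < depth D ->
    derivable withcut (fill G (fill D [IF A] ++ [IF (Dia A)])) ->
    derivable withcut (fill G (fill D [] ++ [IF (Dia A)]))
| r_cut : forall G A, withcut = true ->
    derivable withcut (fill G [IF A]) -> derivable withcut (fill G [IF (neg A)]) ->
    derivable withcut (fill G []).

(* Main.v *)
Require Import Defs.
From Stdlib Require Import List Permutation Classical Lia Arith Wellfounded.
Import ListNotations.

Fixpoint item_ind2 (P : item -> Prop) (Q : list item -> Prop)
  (hF : forall A, P (IF A)) (hB : forall s, Q s -> P (IB s))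
  (hnil : Q []) (hcons : forall i l, P i -> Q l -> Q (i :: l)) (i : item) : P i :=
  match i with
  | IF A => hF A
  | IB s => hB s ((fix go (l : list item) : Q l :=
                  match l with [] => hnil
                  | j :: l' => hcons j l' (item_ind2 P Q hF hB hnil hcons j) (go l') end) s)
  end.

Lemma item_refl : forall i l, seq_equiv l l -> seq_equiv (i :: l) (i :: l).
Proof.
  apply (item_ind2 (fun i => forall l, seq_equiv l l -> seq_equiv (i :: l) (i :: l))
                   (fun s => seq_equiv s s)).
  - intros; constructor; auto.
  - intros; constructor; auto.
  - constructor.
  - intros; auto.
Qed.

Lemma se_refl : forall l, seq_equiv l l.
Proof. induction l; [constructor | apply item_refl; auto]. Qed.

Lemma se_sym : forall l l', seq_equiv l l' -> seq_equiv l' l.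
Proof. intros l l' H; induction H; try (constructor; auto; fail). eapply se_trans; eauto. Qed.

Lemma se_cons : forall i l l', seq_equiv l l' -> seq_equiv (i :: l) (i :: l').
Proof. intros [A|s] l l' H; constructor; auto using se_refl. Qed.

Lemma se_app_r : forall a a' b, seq_equiv a a' -> seq_equiv (a ++ b) (a' ++ b).
Proof.
  intros a a' b H; induction H; simpl; try (constructor; auto; fail).
  apply se_refl. eapply se_trans; eauto.
Qed.

Lemma se_app_l : forall a b b', seq_equiv b b' -> seq_equiv (a ++ b) (a ++ b').
Proof. induction a; simpl; intros; auto. apply se_cons; auto. Qed.

Lemma se_app : forall a a' b b', seq_equiv a a' -> seq_equiv b b' -> seq_equiv (a ++ b) (a' ++ b').
Proof. intros. eapply se_trans. apply se_app_r; eauto. apply se_app_l; auto. Qed.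

Lemma se_perm : forall l l', Permutation l l' -> seq_equiv l l'.
Proof.
  intros l l' H; induction H.
  - constructor.
  - apply se_cons; auto.
  - constructor.
  - eapply se_trans; eauto.
Qed.

Lemma fill_cong : forall G X Y, seq_equiv X Y -> seq_equiv (fill G X) (fill G Y).
Proof.
  induction G; simpl; intros.
  - apply se_app_l; auto.
  - apply se_app_l. constructor. auto. constructor.
Qed.

Definition Dn := derivable false.
Ltac psolve := solve [ eauto 7 using perm_swap, perm_skip, perm_trans, Permutation_refl ].

Lemma D_eq : forall b X Y, derivable b X -> seq_equiv X Y -> derivable b Y.
Proof. intros; eapply r_exch; eauto. Qed.

Lemma D_perm : forall G X Y, Dn (fill G X) -> Permutation X Y -> Dn (fill G Y).
Proof. intros. eapply D_eq; eauto. apply fill_cong, se_perm; auto. Qed.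

Fixpoint shift (G : ctx) (X : sequent) : ctx :=
  match G with Hole d => Hole (d ++ X) | Nest d G' => Nest d (shift G' X) end.

Lemma fill_shift : forall G X Y, fill (shift G X) Y = fill G (X ++ Y).
Proof. induction G; simpl; intros; [rewrite app_assoc; auto | rewrite IHG; auto]. Qed.

Definition prep (d : sequent) (H : ctx) : ctx :=
  match H with Hole e => Hole (d ++ e) | Nest e H' => Nest (d ++ e) H' end.

Fixpoint ccomp (G H : ctx) : ctx :=
  match G with Hole d => prep d H | Nest d G' => Nest d (ccomp G' H) end.

Lemma fill_ccomp : forall G H S, fill (ccomp G H) S = fill G (fill H S).
Proof.
  induction G; simpl; intros.
  - destruct H; simpl; rewrite app_assoc; auto.
  - rewrite IHG; auto.
Qed.

Lemma neg_inv : forall A, neg (neg A) = A.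
Proof. induction A; simpl; congruence. Qed.

Lemma identity : forall A G, Dn (fill G [IF (neg A); IF A]).
Proof.
  induction A; intros G; simpl.
  - apply r_id.
  - eapply D_perm. apply (r_id false G n). apply perm_swap.
  -
    replace (fill G [IF (Or (neg A1) (neg A2)); IF (And A1 A2)])
      with (fill (shift G [IF (Or (neg A1) (neg A2))]) [IF (And A1 A2)])
      by (rewrite fill_shift; auto).
    apply r_and; rewrite fill_shift.
    + eapply D_perm with (X := [IF A1; IF (Or (neg A1) (neg A2))]); [|apply perm_swap].
      replace (fill G [IF A1; IF (Or (neg A1) (neg A2))])
        with (fill (shift G [IF A1]) [IF (Or (neg A1) (neg A2))]) by (rewrite fill_shift; auto).
      apply r_or. rewrite fill_shift.
      eapply D_perm with (X := [IF (neg A2); IF (neg A1); IF A1]).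
      2:{ simpl. psolve. }
      replace (fill G [IF (neg A2); IF (neg A1); IF A1])
        with (fill (shift G [IF (neg A2)]) [IF (neg A1); IF A1]) by (rewrite fill_shift; auto).
      apply IHA1.
    + eapply D_perm with (X := [IF A2; IF (Or (neg A1) (neg A2))]); [|apply perm_swap].
      replace (fill G [IF A2; IF (Or (neg A1) (neg A2))])
        with (fill (shift G [IF A2]) [IF (Or (neg A1) (neg A2))]) by (rewrite fill_shift; auto).
      apply r_or. rewrite fill_shift.
      eapply D_perm with (X := [IF (neg A1); IF (neg A2); IF A2]).
      2:{ simpl. psolve. }
      replace (fill G [IF (neg A1); IF (neg A2); IF A2])
        with (fill (shift G [IF (neg A1)]) [IF (neg A2); IF A2]) by (rewrite fill_shift; auto).
      apply IHA2.
  -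
    eapply D_perm with (X := [IF (Or A1 A2); IF (And (neg A1) (neg A2))]); [|apply perm_swap].
    replace (fill G [IF (Or A1 A2); IF (And (neg A1) (neg A2))])
      with (fill (shift G [IF (Or A1 A2)]) [IF (And (neg A1) (neg A2))])
      by (rewrite fill_shift; auto).
    apply r_and; rewrite fill_shift.
    + eapply D_perm with (X := [IF (neg A1); IF (Or A1 A2)]); [|apply perm_swap].
      replace (fill G [IF (neg A1); IF (Or A1 A2)])
        with (fill (shift G [IF (neg A1)]) [IF (Or A1 A2)]) by (rewrite fill_shift; auto).
      apply r_or. rewrite fill_shift.
      eapply D_perm with (X := [IF A2; IF (neg A1); IF A1]).
      2:{ simpl. psolve. }
      replace (fill G [IF A2; IF (neg A1); IF A1])
        with (fill (shift G [IF A2]) [IF (neg A1); IF A1]) by (rewrite fill_shift; auto).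
      apply IHA1.
    + eapply D_perm with (X := [IF (neg A2); IF (Or A1 A2)]); [|apply perm_swap].
      replace (fill G [IF (neg A2); IF (Or A1 A2)])
        with (fill (shift G [IF (neg A2)]) [IF (Or A1 A2)]) by (rewrite fill_shift; auto).
      apply r_or. rewrite fill_shift.
      eapply D_perm with (X := [IF A1; IF (neg A2); IF A2]).
      2:{ simpl. psolve. }
      replace (fill G [IF A1; IF (neg A2); IF A2])
        with (fill (shift G [IF A1]) [IF (neg A2); IF A2]) by (rewrite fill_shift; auto).
      apply IHA2.
  -
    replace (fill G [IF (Dia (neg A)); IF (Box A)])
      with (fill (shift G [IF (Dia (neg A))]) [IF (Box A)]) by (rewrite fill_shift; auto).
    apply r_box. rewrite fill_shift.
    set (D := Nest [] (Hole [IF (Dia (neg A)); IF A])).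
    eapply D_perm with (X := fill D [] ++ [IF (Dia (neg A))]).
    2:{ simpl. apply perm_swap. }
    apply r_dia. simpl; lia.
    simpl.
    eapply D_perm with (X := [IF (Dia (neg A)); IB [IF (Dia (neg A)); IF A; IF (neg A)]]);
      [|apply perm_swap].
    pose proof (IHA (ccomp G (Nest [IF (Dia (neg A))] (Hole [IF (Dia (neg A))])))) as H.
    rewrite fill_ccomp in H. simpl in H.
    set (G2 := ccomp G (Nest [IF (Dia (neg A))] (Hole [IF (Dia (neg A))]))).
    assert (E : forall X, fill G2 X = fill G ([IF (Dia (neg A))] ++ [IB ([IF (Dia (neg A))] ++ X)]))
      by (intros; unfold G2; rewrite fill_ccomp; reflexivity).
    rewrite <- (app_nil_r [IF (Dia (neg A)); IB [IF (Dia (neg A)); IF A; IF (neg A)]]).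
    pose proof (D_perm G2 _ [IF A; IF (neg A)] (IHA G2) (perm_swap _ _ _)) as H2.
    rewrite E in H2. simpl in H2. rewrite app_nil_r. exact H2.
  -
    eapply D_perm with (X := [IF (Dia A); IF (Box (neg A))]); [|apply perm_swap].
    replace (fill G [IF (Dia A); IF (Box (neg A))])
      with (fill (shift G [IF (Dia A)]) [IF (Box (neg A))]) by (rewrite fill_shift; auto).
    apply r_box. rewrite fill_shift. rewrite neg_inv.
    set (D := Nest [] (Hole [IF (Dia A); IF (neg A)])).
    eapply D_perm with (X := fill D [] ++ [IF (Dia A)]).
    2:{ simpl. apply perm_swap. }
    apply r_dia. simpl; lia.
    simpl.
    eapply D_perm with (X := [IF (Dia A); IB [IF (Dia A); IF (neg A); IF A]]);
      [|apply perm_swap].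
    set (G2 := ccomp G (Nest [IF (Dia A)] (Hole [IF (Dia A)]))).
    assert (E : forall X, fill G2 X = fill G ([IF (Dia A)] ++ [IB ([IF (Dia A)] ++ X)]))
      by (intros; unfold G2; rewrite fill_ccomp; reflexivity).
    pose proof (IHA G2) as H2. rewrite E in H2. simpl in H2. exact H2.
Qed.

Fixpoint forces {W : Type} (R : W -> W -> Prop) (V : nat -> W -> Prop) (w : W) (A : form) : Prop :=
  match A with
  | Atom a => V a w
  | NAtom a => ~ V a w
  | And A B => forces R V w A /\ forces R V w B
  | Or A B => forces R V w A \/ forces R V w B
  | Box A => forall v, R w v -> forces R V v A
  | Dia A => exists v, R w v /\ forces R V v A
  end.

Fixpoint itrue {W : Type} (R : W -> W -> Prop) (V : nat -> W -> Prop) (w : W) (i : item) : Prop :=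
  match i with
  | IF A => forces R V w A
  | IB s => forall v, R w v ->
      (fix st (l : list item) : Prop :=
         match l with [] => False | j :: l' => itrue R V v j \/ st l' end) s
  end.

Definition strue {W : Type} (R : W -> W -> Prop) (V : nat -> W -> Prop) (w : W) (s : sequent) :=
  Exists (itrue R V w) s.

Lemma st_eq : forall W R V (v : W) l,
  (fix st (l : list item) : Prop :=
         match l with [] => False | j :: l' => itrue R V v j \/ st l' end) l <-> strue R V v l.
Proof.
  induction l; unfold strue in *; split; intros H.
  - destruct H.
  - inversion H.
  - destruct H as [H|H]; [constructor; auto | apply Exists_cons_tl, IHl; auto].
  - inversion H; subst; [left; auto | right; apply IHl; auto].
Qed.

Lemma itrue_IB : forall W R V (w : W) s,
  itrue R V w (IB s) <-> forall v, R w v -> strue R V v s.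
Proof.
  intros; simpl; split; intros H v Hv; apply st_eq; apply H; auto.
Qed.

Lemma strue_app : forall W R V (w : W) a b,
  strue R V w (a ++ b) <-> strue R V w a \/ strue R V w b.
Proof. intros; unfold strue; apply Exists_app. Qed.

Lemma strue_cons : forall W R V (w : W) i l,
  strue R V w (i :: l) <-> itrue R V w i \/ strue R V w l.
Proof. intros; unfold strue; split; intros H; [inversion H; subst; auto | destruct H; auto]. Qed.

Lemma strue_nil : forall W R V (w : W), ~ strue R V w [].
Proof. intros W R V w H; inversion H. Qed.

Lemma se_true : forall l l', seq_equiv l l' ->
  forall W R V (w : W), strue R V w l -> strue R V w l'.
Proof.
  intros l l' H; induction H; intros W R V w Ht.
  - auto.
  - apply strue_cons in Ht; apply strue_cons; destruct Ht; eauto.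
  - apply strue_cons in Ht; apply strue_cons; destruct Ht as [Ht|Ht].
    + left. apply itrue_IB. rewrite itrue_IB in Ht. intros v Hv. eapply IHseq_equiv1; eauto.
    + right; eapply IHseq_equiv2; eauto.
  - rewrite !strue_cons in *; tauto.
  - eauto.
Qed.

Lemma fill_mono : forall W R V (X Y : sequent),
  (forall v : W, strue R V v X -> strue R V v Y) ->
  forall G w, strue R V w (fill G X) -> strue R V w (fill G Y).
Proof.
  intros W R V X Y HXY G; induction G; simpl; intros w H.
  - apply strue_app in H; apply strue_app; destruct H; auto.
  - apply strue_app in H; apply strue_app; destruct H as [H|H]; auto.
    right. apply strue_cons in H. destruct H as [H|H]; [|apply strue_nil in H; tauto].
    apply strue_cons; left. rewrite itrue_IB in *. intros v Hv; auto.
Qed.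

Lemma fill_comb : forall W R V (X1 X2 Y : sequent),
  (forall v : W, strue R V v X1 -> strue R V v X2 -> strue R V v Y) ->
  forall G w, strue R V w (fill G X1) -> strue R V w (fill G X2) -> strue R V w (fill G Y).
Proof.
  intros W R V X1 X2 Y HXY G; induction G; simpl; intros w H1 H2.
  - apply strue_app in H1; apply strue_app in H2; apply strue_app.
    destruct H1; auto. destruct H2; auto.
  - apply strue_app in H1; apply strue_app in H2; apply strue_app.
    destruct H1 as [H1|H1]; auto. destruct H2 as [H2|H2]; auto.
    right. apply strue_cons in H1. destruct H1 as [H1|H1]; [|apply strue_nil in H1; tauto].
    apply strue_cons in H2. destruct H2 as [H2|H2]; [|apply strue_nil in H2; tauto].
    apply strue_cons; left. rewrite itrue_IB in *. intros v Hv; auto.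
Qed.

Lemma fill_valid : forall W R V (X : sequent),
  (forall v : W, strue R V v X) -> forall G w, strue R V w (fill G X).
Proof.
  intros W R V X HX G; induction G; simpl; intros w.
  - apply strue_app; auto.
  - apply strue_app; right. apply strue_cons; left. rewrite itrue_IB; auto.
Qed.

Lemma forces_neg : forall W R V (w : W) A, forces R V w (neg A) <-> ~ forces R V w A.
Proof.
  intros W R V w A; revert w; induction A; intros w; simpl.
  - tauto.
  - split; [tauto | apply NNPP].
  - rewrite IHA1, IHA2. tauto.
  - rewrite IHA1, IHA2. tauto.
  - split.
    + intros [v [Hv Hn]] H. apply IHA in Hn. auto.
    + intros H. apply NNPP; intros H2. apply H; intros v Hv. apply NNPP; intros H3.
      apply H2; exists v; split; auto. apply IHA; auto.
  - split.
    + intros H [v [Hv Hn]]. specialize (H v Hv). apply IHA in H; auto.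
    + intros H v Hv. apply IHA. intros H2; apply H; eauto.
Qed.

Lemma dia_aux : forall W R V (A : form),
  (forall x y z : W, R x y -> R y z -> R x z) ->
  forall D v, (depth D = 0 -> ~ forces R V v A) -> (forall u, R v u -> ~ forces R V u A) ->
  strue R V v (fill D [IF A]) -> strue R V v (fill D []).
Proof.
  intros W R V A Htr D; induction D; simpl; intros v H0 H1 H.
  - apply strue_app in H; destruct H as [H|H]; [apply strue_app; auto|].
    apply strue_cons in H; destruct H as [H|H]; [exfalso; apply H0; auto | apply strue_nil in H; tauto].
  - apply strue_app in H; apply strue_app; destruct H as [H|H]; auto.
    right. apply strue_cons in H. destruct H as [H|H]; [|apply strue_nil in H; tauto].
    apply strue_cons; left. rewrite itrue_IB in *. intros u Hu. apply IHD; eauto.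
Qed.

Theorem soundness : forall b S, derivable b S ->
  forall W (R : W -> W -> Prop) V,
  (forall x y z, R x y -> R y z -> R x z) -> well_founded (fun x y => R y x) ->
  forall w, strue R V w S.
Proof.
  intros b S H; induction H; intros W R V Htr Hwf w.
  - eapply se_true; eauto.
  - apply fill_valid. intros v. apply strue_cons.
    destruct (classic (V a v)); [right; apply strue_cons; left; simpl; auto | left; simpl; auto].
  - eapply fill_comb; [|apply IHderivable1; auto|apply IHderivable2; auto].
    intros v H1 H2. apply strue_cons in H1; apply strue_cons in H2.
    destruct H1 as [H1|H1]; [|apply strue_nil in H1; tauto].
    destruct H2 as [H2|H2]; [|apply strue_nil in H2; tauto].
    apply strue_cons; left; simpl in *; auto.
  - eapply fill_mono; [|apply IHderivable; auto].
    intros v H1. apply strue_cons; left; simpl.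
    apply strue_cons in H1; destruct H1 as [H1|H1]; auto.
    apply strue_cons in H1; destruct H1 as [H1|H1]; auto. apply strue_nil in H1; tauto.
  - eapply fill_mono; [|apply IHderivable; auto].
    intros v H1. apply strue_cons; left; simpl.
    apply strue_cons in H1; destruct H1 as [H1|H1]; [|apply strue_nil in H1; tauto].
    rewrite itrue_IB in H1.
    intros u. induction u as [u IH] using (well_founded_ind Hwf). intros Hu.
    specialize (H1 u Hu). apply strue_cons in H1. destruct H1 as [H1|H1].
    + simpl in H1. destruct H1 as [u' [Hu' Hn]]. apply forces_neg in Hn.
      exfalso; apply Hn. apply IH; eauto.
    + apply strue_cons in H1; destruct H1 as [H1|H1]; auto. apply strue_nil in H1; tauto.
  - eapply fill_mono; [|apply IHderivable; auto].
    intros v HH1. apply strue_app in HH1; apply strue_app.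
    destruct (classic (forces R V v (Dia A))) as [HD|HD].
    + right; apply strue_cons; left; auto.
    + destruct HH1 as [HH1|HH1]; [|right; auto].
      left. apply (dia_aux W R V A Htr D v); [intros Hd; lia | intros u Hu HA; apply HD; simpl; eauto | exact HH1].
  - eapply fill_comb; [|apply IHderivable1; auto|apply IHderivable2; auto].
    intros v K1 K2. apply strue_cons in K1; apply strue_cons in K2.
    destruct K1 as [K1|K1]; [|apply strue_nil in K1; tauto].
    destruct K2 as [K2|K2]; [|apply strue_nil in K2; tauto].
    simpl in *. apply forces_neg in K2. tauto.
Qed.

Inductive tree : Type := Node : list form -> list form -> list tree -> tree.
Definition cur t := match t with Node c _ _ => c end.
Definition hist t := match t with Node _ h _ => h end.
Definition kids t := match t with Node _ _ ks => ks end.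

Fixpoint tree_ind2 (P : tree -> Prop)
  (hN : forall c h ks, (forall k, In k ks -> P k) -> P (Node c h ks)) (t : tree) : P t :=
  match t with
  | Node c h ks => hN c h ks
      ((fix go (l : list tree) : forall k, In k l -> P k :=
          match l with
          | [] => fun k H => False_ind _ H
          | k' :: l' => fun k H =>
              match H with
              | or_introl e => eq_ind k' P (tree_ind2 P hN k') k e
              | or_intror H' => go l' k H'
              end
          end) ks)
  end.

Fixpoint size (t : tree) : nat :=
  match t with Node _ _ ks => S (list_sum (map size ks)) end.

Lemma size_kid : forall c h ks k, In k ks -> size k < size (Node c h ks).
Proof.
  intros c h ks k H; simpl. induction ks; simpl in *; [tauto|].
  destruct H; subst; [lia|]. specialize (IHks H). lia.
Qed.

Fixpoint er (t : tree) : sequent :=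
  match t with Node c h ks => map IF c ++ map (fun k => IB (er k)) ks end.
Definition erk (k : tree) : item := IB (er k).

Lemma er_node : forall c h ks, er (Node c h ks) = map IF c ++ map erk ks.
Proof. reflexivity. Qed.

Inductive frame : Type := Fr : list form -> list form -> list tree -> list tree -> frame.

Fixpoint plug (C : list frame) (t : tree) : tree :=
  match C with
  | [] => t
  | Fr c h l r :: C' => Node c h (l ++ plug C' t :: r)
  end.

Lemma plug_app : forall C1 C2 t, plug (C1 ++ C2) t = plug C1 (plug C2 t).
Proof. induction C1 as [|[] C1 IH]; simpl; intros; auto. rewrite IH; auto. Qed.

Fixpoint gctx (C : list frame) (d : sequent) : ctx :=
  match C with
  | [] => Hole d
  | Fr c h l r :: C' => Nest (map IF c ++ map erk l ++ map erk r) (gctx C' d)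
  end.

Lemma fill_gctx : forall C d X, fill (gctx C d) X = fill (gctx C []) (d ++ X).
Proof. induction C as [|[] C IH]; simpl; intros; auto. rewrite IH; auto. Qed.

Lemma er_plug : forall C t, seq_equiv (er (plug C t)) (fill (gctx C []) (er t)).
Proof.
  induction C as [|[c h l r] C IH]; intros t; simpl.
  - apply se_refl.
  - rewrite map_app. simpl.
    eapply se_trans.
    + apply se_app_l. apply se_app_l. apply se_cons with (i := IB (er (plug C t))) (l := map erk r) (l' := map erk r). apply se_refl.
    + eapply se_trans.
      2:{ apply se_app_l. constructor. apply IH. constructor. }
      apply se_perm. rewrite <- !app_assoc. apply Permutation_app_head.
      apply Permutation_app_head. simpl. apply Permutation_cons_append.
Qed.

Lemma focus : forall C t d X, Permutation (er t) (d ++ X) ->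
  seq_equiv (er (plug C t)) (fill (gctx C d) X).
Proof.
  intros. eapply se_trans. apply er_plug. rewrite (fill_gctx C d X).
  apply fill_cong, se_perm; auto.
Qed.

Lemma Dn_focus : forall C t d X, Permutation (er t) (d ++ X) ->
  (Dn (er (plug C t)) <-> Dn (fill (gctx C d) X)).
Proof.
  intros C t d X H. pose proof (focus C t d X H). split; intros; eapply D_eq; eauto.
  apply se_sym; auto.
Qed.

Lemma perm_mid : forall {A} (a b : list A) x, Permutation (a ++ x :: b) ((a ++ b) ++ [x]).
Proof. intros. eapply perm_trans. apply Permutation_sym, Permutation_middle. apply Permutation_cons_append. Qed.

Lemma step_and : forall C c1 c2 A B h ks h1 h2,
  ~ Dn (er (plug C (Node (c1 ++ And A B :: c2) h ks))) ->
  ~ Dn (er (plug C (Node (A :: c1 ++ c2) h1 ks))) \/ ~ Dn (er (plug C (Node (B :: c1 ++ c2) h2 ks))).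
Proof.
  intros. apply NNPP; intros Hn. apply H.
  set (d := map IF (c1 ++ c2) ++ map erk ks).
  apply (Dn_focus C _ d [IF (And A B)]).
  { unfold d. rewrite er_node, !map_app. simpl. rewrite <- !app_assoc. apply Permutation_app_head.
    apply Permutation_sym. simpl. eapply perm_trans. apply Permutation_app_head. apply Permutation_sym, Permutation_cons_append. simpl. apply Permutation_sym, Permutation_middle. }
  apply r_and.
  - apply (Dn_focus C (Node (A :: c1 ++ c2) h1 ks)).
    { unfold d; rewrite er_node; simpl. apply Permutation_cons_append. }
    apply NNPP; tauto.
  - apply (Dn_focus C (Node (B :: c1 ++ c2) h2 ks)).
    { unfold d; rewrite er_node; simpl. apply Permutation_cons_append. }
    apply NNPP; tauto.
Qed.

Lemma perm_front2 : forall {T} (x y : T) d, Permutation (x :: y :: d) (d ++ [x; y]).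
Proof. intros. change (x :: y :: d) with ([x; y] ++ d). apply Permutation_app_comm. Qed.

Lemma perm_nodeX : forall c1 c2 X ks,
  Permutation (map IF (c1 ++ X :: c2) ++ map erk ks) ((map IF (c1 ++ c2) ++ map erk ks) ++ [IF X]).
Proof.
  intros. rewrite !map_app. simpl. rewrite <- !app_assoc. apply Permutation_app_head.
  apply Permutation_sym. simpl. eapply perm_trans. apply Permutation_app_head.
  apply Permutation_sym, Permutation_cons_append. simpl. apply Permutation_sym, Permutation_middle.
Qed.

Lemma step_or : forall C c1 c2 A B h ks h1,
  ~ Dn (er (plug C (Node (c1 ++ Or A B :: c2) h ks))) ->
  ~ Dn (er (plug C (Node (A :: B :: c1 ++ c2) h1 ks))).
Proof.
  intros C c1 c2 A B h ks h1 H Hd. apply H.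
  set (d := map IF (c1 ++ c2) ++ map erk ks).
  apply (Dn_focus C _ d [IF (Or A B)]). { unfold d. rewrite er_node. apply perm_nodeX. }
  apply r_or.
  apply (Dn_focus C (Node (A :: B :: c1 ++ c2) h1 ks)); auto.
  unfold d; rewrite er_node; simpl. apply perm_front2.
Qed.

Lemma step_box : forall C c1 c2 A h ks h1 hh,
  ~ Dn (er (plug C (Node (c1 ++ Box A :: c2) h ks))) ->
  ~ Dn (er (plug C (Node (c1 ++ c2) h1 (ks ++ [Node [Dia (neg A); A] hh []])))).
Proof.
  intros C c1 c2 A h ks h1 hh H Hd. apply H.
  set (d := map IF (c1 ++ c2) ++ map erk ks).
  apply (Dn_focus C _ d [IF (Box A)]). { unfold d. rewrite er_node. apply perm_nodeX. }
  apply r_box.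
  apply (Dn_focus C (Node (c1 ++ c2) h1 (ks ++ [Node [Dia (neg A); A] hh []]))); auto.
  unfold d; rewrite er_node, (map_app erk ks), app_assoc; simpl; apply Permutation_refl.
Qed.

Lemma neg_neq : forall A, neg A <> A.
Proof. destruct A; simpl; discriminate. Qed.

Lemma step_id : forall C c h ks A, In A c -> In (neg A) c -> Dn (er (plug C (Node c h ks))).
Proof.
  intros C c h ks A H1 H2.
  destruct (in_split _ _ H1) as [c1 [c2 E]]. subst c.
  assert (H3 : In (neg A) (c1 ++ c2)).
  { apply in_app_or in H2; apply in_or_app; destruct H2 as [H2|[H2|H2]]; auto.
    exfalso; apply (neg_neq A); auto. }
  destruct (in_split _ _ H3) as [c3 [c4 E]].
  set (d := map IF (c3 ++ c4) ++ map erk ks).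
  apply (Dn_focus C _ d [IF (neg A); IF A]).
  2: apply identity.
  rewrite er_node.
  assert (P1 : Permutation (c1 ++ A :: c2) (A :: neg A :: c3 ++ c4)).
  { eapply perm_trans. apply Permutation_sym, Permutation_middle. apply perm_skip. rewrite E.
    apply Permutation_sym, Permutation_middle. }
  eapply perm_trans. apply Permutation_app_tail. apply Permutation_map. exact P1.
  simpl. unfold d.
  eapply perm_trans. apply (perm_front2 (IF A) (IF (neg A))).
  apply Permutation_app_head. apply perm_swap.
Qed.

Definition diaargs (c : list form) : list form :=
  flat_map (fun A => match A with Dia B => [B] | _ => [] end) c.
Definition fcur (F : frame) := match F with Fr c _ _ _ => c end.
Definition DsC (C : list frame) : list form := flat_map (fun F => diaargs (fcur F)) C.

Lemma in_diaargs : forall B c, In B (diaargs c) <-> In (Dia B) c.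
Proof.
  intros B c; unfold diaargs; rewrite in_flat_map; split.
  - intros [A [HA HB]]. destruct A; simpl in HB; try tauto. destruct HB as [HB|HB]; [subst; auto|tauto].
  - intros H; exists (Dia B); simpl; auto.
Qed.

Lemma perm_dia : forall {T} (a a' b c : list T) w y, Permutation a (y :: a') ->
  Permutation (a ++ b ++ w :: c) (((a' ++ b ++ c) ++ [w]) ++ [y]).
Proof.
  intros T a a' b c w y H.
  eapply perm_trans. apply Permutation_app_tail. exact H. simpl.
  eapply perm_trans. apply Permutation_cons_append. apply Permutation_app_tail.
  rewrite (app_assoc a' b c). rewrite (app_assoc a' b (w :: c)). apply perm_mid.
Qed.

Lemma step_deliver : forall C c h ks B h1, In B (DsC C) ->
  ~ Dn (er (plug C (Node c h ks))) -> ~ Dn (er (plug C (Node (B :: c) h1 ks))).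
Proof.
  intros C c h ks B h1 HB H Hd. apply H.
  unfold DsC in HB. apply in_flat_map in HB. destruct HB as [F [HF HB]].
  destruct (in_split _ _ HF) as [C1 [C2 E]]. subst C.
  destruct F as [fc fh l r]. simpl in HB. apply in_diaargs in HB.
  destruct (in_split _ _ HB) as [f1 [f2 Ef]].
  set (t := Node c h ks).
  set (Dc := Nest (map IF (f1 ++ f2) ++ map erk l ++ map erk r) (gctx C2 (er t))).
  assert (Key : forall t' Z, seq_equiv (er t') Z ->
    seq_equiv (er (plug (C1 ++ Fr fc fh l r :: C2) t'))
      (fill (gctx C1 []) (((map IF (f1 ++ f2) ++ map erk l ++ map erk r) ++ [IB (fill (gctx C2 []) Z)]) ++ [IF (Dia B)]))).
  { intros t' Z HZ. rewrite plug_app. eapply se_trans. apply er_plug. apply fill_cong.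
    simpl. eapply se_trans.
    - apply se_app_l. rewrite map_app. apply se_app_l. simpl.
      apply se_skipB.
      + eapply se_trans. apply er_plug. apply fill_cong. exact HZ.
      + apply se_refl.
    - apply se_perm. apply perm_dia. rewrite Ef, !map_app. simpl.
      apply Permutation_sym, Permutation_middle. }
  eapply D_eq. 2:{ apply se_sym, (Key t (er t ++ [])). rewrite app_nil_r; apply se_refl. }
  assert (E1 : ((map IF (f1 ++ f2) ++ map erk l ++ map erk r) ++ [IB (fill (gctx C2 []) (er t ++ []))])
               = fill Dc []) by (unfold Dc; cbn [fill]; rewrite (fill_gctx C2 (er t) []); reflexivity).
  rewrite E1. apply r_dia. unfold Dc; simpl; lia.
  eapply D_eq. apply Hd.
  eapply se_trans. apply (Key (Node (B :: c) h1 ks) (er t ++ [IF B])).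
  - rewrite er_node. unfold t; rewrite er_node. simpl. apply se_perm, Permutation_cons_append.
  - unfold Dc; cbn [fill]. rewrite (fill_gctx C2 (er t) [IF B]). apply se_refl.
Qed.

Lemma form_eq_dec : forall x y : form, {x = y} + {x <> y}.
Proof. decide equality; apply Nat.eq_dec. Qed.

Definition closed (Sg : list form) : Prop :=
  (forall A B, In (And A B) Sg -> In A Sg /\ In B Sg) /\
  (forall A B, In (Or A B) Sg -> In A Sg /\ In B Sg) /\
  (forall A, In (Box A) Sg -> In (Dia (neg A)) Sg /\ In A Sg) /\
  (forall A, In (Dia A) Sg -> In A Sg).

Definition NI (Sg : list form) (c h : list form) (ks : list tree) : Prop :=
  incl c h /\ incl h Sg /\
  (forall A B, In (And A B) h -> In (And A B) c \/ In A h \/ In B h) /\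
  (forall A B, In (Or A B) h -> In (Or A B) c \/ (In A h /\ In B h)) /\
  (forall A, In (Box A) h -> In (Box A) c \/ exists k, In k ks /\ In A (hist k)) /\
  (forall A, In (Dia A) h -> In (Dia A) c) /\
  (forall a, In (Atom a) h -> In (Atom a) c) /\
  (forall a, In (NAtom a) h -> In (NAtom a) c).

Inductive AllN (P : list form -> list form -> list tree -> Prop) : tree -> Prop :=
  allN : forall c h ks, P c h ks -> (forall k, In k ks -> AllN P k) -> AllN P (Node c h ks).

Inductive Sat (Sg : list form) : list form -> tree -> Prop :=
  sat : forall Ds c h ks,
    (forall A B, ~ In (And A B) c) -> (forall A B, ~ In (Or A B) c) -> (forall A, ~ In (Box A) c) ->
    incl Ds h -> (forall a, In (Atom a) h -> In (NAtom a) h -> False) -> NI Sg c h ks ->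
    (forall k, In k ks -> Sat Sg (Ds ++ diaargs c) k) -> Sat Sg Ds (Node c h ks).

Inductive Ext : tree -> tree -> Prop :=
  ext : forall c h ks c' h' ks', incl h h' ->
    (forall k, In k ks -> exists k', In k' ks' /\ Ext k k') -> Ext (Node c h ks) (Node c' h' ks').

Lemma Ext_refl : forall t, Ext t t.
Proof. apply tree_ind2. intros c h ks IH. constructor. apply incl_refl. intros k Hk; exists k; auto. Qed.

Lemma Ext_trans : forall t1 t2 t3, Ext t1 t2 -> Ext t2 t3 -> Ext t1 t3.
Proof.
  intros t1; induction t1 as [c h ks IH] using tree_ind2; intros t2 t3 H12 H23.
  inversion H12; subst. inversion H23; subst. constructor. eapply incl_tran; eauto.
  intros k Hk0. destruct (H4 k Hk0) as [k' [Hk' E1]].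
  destruct (H6 k' Hk') as [k'' [Hk'' E3]]. exists k''; split; eauto.
Qed.

Lemma filter_len_mono : forall {T} (f g : T -> bool) l,
  (forall x, In x l -> f x = true -> g x = true) -> length (filter f l) <= length (filter g l).
Proof.
  intros T f g l; induction l; simpl; intros H; auto.
  destruct (f a) eqn:Ef; destruct (g a) eqn:Eg; simpl.
  - specialize (IHl (fun x Hx => H x (or_intror Hx))); lia.
  - rewrite (H a (or_introl eq_refl) Ef) in Eg; discriminate.
  - specialize (IHl (fun x Hx => H x (or_intror Hx))); lia.
  - apply IHl; auto.
Qed.

Lemma filter_len_strict : forall {T} (f g : T -> bool) l x,
  (forall x, In x l -> f x = true -> g x = true) -> In x l -> f x = false -> g x = true ->
  length (filter f l) < length (filter g l).
Proof.
  intros T f g l; induction l; simpl; intros x H Hx Hf Hg; [tauto|].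
  destruct Hx as [Hx|Hx].
  - subst. rewrite Hf, Hg; simpl.
    pose proof (filter_len_mono f g l (fun y Hy => H y (or_intror Hy))); lia.
  - specialize (IHl x (fun y Hy => H y (or_intror Hy)) Hx Hf Hg).
    destruct (f a) eqn:Ef; destruct (g a) eqn:Eg; simpl; try lia.
    rewrite (H a (or_introl eq_refl) Ef) in Eg; discriminate.
Qed.

Definition inb (x : form) (L : list form) : bool := if in_dec form_eq_dec x L then true else false.
Definition cnt (Sg L : list form) := length (filter (fun x => inb x L) Sg).
Definition miss (Sg L : list form) := length (filter (fun x => negb (inb x L)) Sg).

Lemma inb_true : forall x L, inb x L = true <-> In x L.
Proof. intros; unfold inb; destruct (in_dec form_eq_dec x L); split; auto; discriminate. Qed.
Lemma inb_false : forall x L, inb x L = false <-> ~ In x L.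
Proof. intros; unfold inb; destruct (in_dec form_eq_dec x L); split; auto; try tauto; try discriminate. Qed.

Lemma cnt_le : forall Sg L, cnt Sg L <= length Sg.
Proof. intros; unfold cnt; apply filter_length_le. Qed.

Lemma cnt_mono : forall Sg L1 L2, incl L1 L2 -> cnt Sg L1 <= cnt Sg L2.
Proof.
  intros; unfold cnt; apply filter_len_mono. intros x _ Hx. apply inb_true; apply inb_true in Hx; auto.
Qed.

Lemma cnt_strict : forall Sg L1 L2 x, incl L1 L2 -> In x Sg -> In x L2 -> ~ In x L1 ->
  cnt Sg L1 < cnt Sg L2.
Proof.
  intros; unfold cnt; eapply filter_len_strict; eauto.
  - intros y _ Hy. apply inb_true; apply inb_true in Hy; auto.
  - apply inb_false; auto.
  - apply inb_true; auto.
Qed.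

Lemma miss_mono : forall Sg L1 L2, incl L1 L2 -> miss Sg L2 <= miss Sg L1.
Proof.
  intros; unfold miss; apply filter_len_mono. intros x _ Hx.
  destruct (inb x L2) eqn:E2; [simpl in Hx; discriminate|].
  apply inb_false in E2. destruct (inb x L1) eqn:E1; auto. apply inb_true in E1. exfalso; auto.
Qed.

Lemma miss_strict : forall Sg L x, In x Sg -> ~ In x L -> miss Sg (x :: L) < miss Sg L.
Proof.
  intros; unfold miss; eapply filter_len_strict; eauto.
  - intros y _ Hy. destruct (inb y (x :: L)) eqn:E; [discriminate|]. apply inb_false in E.
    destruct (inb y L) eqn:E2; auto. apply inb_true in E2. exfalso; apply E; simpl; auto.
  - destruct (inb x (x :: L)) eqn:E; auto. apply inb_false in E. exfalso; apply E; simpl; auto.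
  - destruct (inb x L) eqn:E; auto. apply inb_true in E. tauto.
Qed.

Fixpoint fsize (A : form) : nat :=
  match A with
  | Atom _ | NAtom _ => 1
  | And A B | Or A B => S (fsize A + fsize B)
  | Box A | Dia A => S (fsize A)
  end.
Definition weight (c : list form) := list_sum (map fsize c).

Lemma weight_app : forall c1 c2, weight (c1 ++ c2) = weight c1 + weight c2.
Proof. intros; unfold weight; rewrite map_app, list_sum_app; auto. Qed.
Lemma weight_cons : forall A c, weight (A :: c) = fsize A + weight c.
Proof. reflexivity. Qed.

Definition disch (h : list form) (ks : list tree) (Y : form) : Prop :=
  match Y with
  | And A B => In A h \/ In B h
  | Or A B => In A h /\ In B h
  | Box A => exists k, In k ks /\ In A (hist k)
  | _ => False
  end.

Lemma NI_step : forall Sg c h ks c' h' ks', NI Sg c h ks ->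
  incl h h' -> incl ks ks' -> incl c' h' -> incl h' Sg ->
  (forall Y, In Y h' -> In Y h \/ In Y c') ->
  (forall Y, In Y c -> In Y c' \/ disch h' ks' Y) -> NI Sg c' h' ks'.
Proof.
  intros Sg c h ks c' h' ks' [H1 [H2 [H3 [H4 [H5 [H6 [H7 H8]]]]]]] Hh Hk Hc' Hs Hnew Hold.
  split; [auto|]. split; [auto|]. split; [|split; [|split; [|split; [|split]]]].
  - intros A B HA. destruct (Hnew _ HA) as [HA'|HA']; [|left; auto].
    destruct (H3 A B HA') as [HA2|[HA2|HA2]]; [|right; left; auto|right; right; auto].
    destruct (Hold _ HA2) as [HA3|HA3]; simpl in HA3; [left; auto|right; auto].
  - intros A B HA. destruct (Hnew _ HA) as [HA'|HA']; [|left; auto].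
    destruct (H4 A B HA') as [HA2|[HA2 HA3]]; [|right; split; auto].
    destruct (Hold _ HA2) as [HA4|HA4]; simpl in HA4; [left; auto|right; auto].
  - intros A HA. destruct (Hnew _ HA) as [HA'|HA']; [|left; auto].
    destruct (H5 A HA') as [HA2|[k [Hk1 Hk2]]]; [|right; exists k; auto].
    destruct (Hold _ HA2) as [HA4|HA4]; simpl in HA4; [left; auto|right; auto].
  - intros A HA. destruct (Hnew _ HA) as [HA'|HA']; [|auto].
    destruct (Hold _ (H6 A HA')) as [HA4|HA4]; simpl in HA4; tauto.
  - intros A HA. destruct (Hnew _ HA) as [HA'|HA']; [|auto].
    destruct (Hold _ (H7 A HA')) as [HA4|HA4]; simpl in HA4; tauto.
  - intros A HA. destruct (Hnew _ HA) as [HA'|HA']; [|auto].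
    destruct (Hold _ (H8 A HA')) as [HA4|HA4]; simpl in HA4; tauto.
Qed.

Lemma NI_refl : forall Sg c ks, incl c Sg -> NI Sg c c ks.
Proof.
  intros; repeat split; auto using incl_refl.
Qed.

Definition Pc Sg C t := (forall F, In F C -> incl (fcur F) Sg) -> AllN (NI Sg) t ->
  ~ Dn (er (plug C t)) ->
  exists t', Ext t t' /\ Sat Sg (DsC C) t' /\ AllN (NI Sg) t' /\ ~ Dn (er (plug C t')).

Lemma DsC_app : forall C c h l r, DsC (C ++ [Fr c h l r]) = DsC C ++ diaargs c.
Proof. intros; unfold DsC; rewrite flat_map_app; simpl; rewrite app_nil_r; auto. Qed.

Lemma kids_loop : forall Sg C c h r l,
  (forall k, In k r -> forall l' r', Pc Sg (C ++ [Fr c h l' r']) k) ->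
  (forall F, In F C -> incl (fcur F) Sg) -> incl c Sg ->
  (forall k, In k r -> AllN (NI Sg) k) ->
  ~ Dn (er (plug C (Node c h (l ++ r)))) ->
  exists r', (forall k, In k r -> exists k', In k' r' /\ Ext k k') /\
    (forall k', In k' r' -> Sat Sg (DsC C ++ diaargs c) k' /\ AllN (NI Sg) k') /\
    ~ Dn (er (plug C (Node c h (l ++ r')))).
Proof.
  intros Sg C c h r; induction r as [|k r IH]; intros l Hp HC Hc Hinv Hnd.
  - exists []. split; [intros k []|]. split; [intros k []|]. auto.
  - assert (E : plug C (Node c h (l ++ k :: r)) = plug (C ++ [Fr c h l r]) k)
      by (rewrite plug_app; reflexivity).
    destruct (Hp k (or_introl eq_refl) l r) as [k' [Ek [Sk [Ik Nk]]]].
    + intros F HF. apply in_app_or in HF. destruct HF as [HF|[HF|[]]]; auto. subst; simpl; auto.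
    + apply Hinv; left; auto.
    + rewrite <- E; auto.
    + rewrite DsC_app in Sk. rewrite plug_app in Nk. simpl in Nk.
      destruct (IH (l ++ [k'])) as [r' [H1 [H2 H3]]].
      * intros k0 Hk0; apply Hp; right; auto.
      * auto.
      * auto.
      * intros k0 Hk0; apply Hinv; right; auto.
      * rewrite <- app_assoc; simpl; auto.
      * exists (k' :: r'). split; [|split].
        -- intros k0 [Hk0|Hk0]; [subst; exists k'; simpl; auto|].
           destruct (H1 k0 Hk0) as [k1 [Hk1 E1]]; exists k1; simpl; auto.
        -- intros k0 [Hk0|Hk0]; [subst; auto | auto].
        -- rewrite <- app_assoc in H3; simpl in H3; auto.
Qed.

Definition fresh Sg k := exists A, In (Box A) Sg /\ k = Node [Dia (neg A); A] [Dia (neg A); A] [].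

Lemma DsC_Sg : forall Sg C, closed Sg -> (forall F, In F C -> incl (fcur F) Sg) -> incl (DsC C) Sg.
Proof.
  intros Sg C Hcl HC B HB. unfold DsC in HB. apply in_flat_map in HB.
  destruct HB as [F [HF HB]]. apply in_diaargs in HB. apply (HC F HF) in HB.
  destruct Hcl as [_ [_ [_ H4]]]. auto.
Qed.

Lemma incl_dia : forall c c', (forall D, In (Dia D) c -> In (Dia D) c') -> incl (diaargs c) (diaargs c').
Proof. intros c c' H x Hx. apply in_diaargs; apply in_diaargs in Hx; auto. Qed.

Lemma NI_kids : forall Sg c h ks ks', NI Sg c h ks ->
  (forall k, In k ks -> exists k', In k' ks' /\ Ext k k') -> NI Sg c h ks'.
Proof.
  intros Sg c h ks ks' [H1 [H2 [H3 [H4 [H5 [H6 [H7 H8]]]]]]] HE.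
  repeat (split; auto).
  intros A HA. destruct (H5 A HA) as [HA'|[k [Hk Hk2]]]; auto.
  destruct (HE k Hk) as [k' [Hk' Ek]]. right; exists k'; split; auto.
  inversion Ek; subst; simpl in *; auto.
Qed.

Lemma fsize_pos : forall A, 0 < fsize A.
Proof. destruct A; simpl; lia. Qed.

Lemma local_loop : forall Sg C c0 ks0, closed Sg -> (forall F, In F C -> incl (fcur F) Sg) ->
  (forall c h ks, incl (diaargs c0) (diaargs c) -> (forall k, In k ks -> In k ks0 \/ fresh Sg k) ->
     forall k, In k ks -> forall l r, Pc Sg (C ++ [Fr c h l r]) k) ->
  forall m1 m2 c h ks, miss Sg h = m1 -> weight c = m2 -> incl (diaargs c0) (diaargs c) ->
  (forall k, In k ks -> In k ks0 \/ fresh Sg k) -> NI Sg c h ks ->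
  (forall k, In k ks -> AllN (NI Sg) k) ->
  ~ Dn (er (plug C (Node c h ks))) ->
  exists t', Ext (Node c h ks) t' /\ Sat Sg (DsC C) t' /\ AllN (NI Sg) t' /\ ~ Dn (er (plug C t')).
Proof.
  intros Sg C c0 ks0 Hcl HC Hk.
  intros m1; induction m1 as [m1 IH1] using (well_founded_induction lt_wf).
  intros m2; induction m2 as [m2 IH2] using (well_founded_induction lt_wf).
  intros c h ks Em1 Em2 Hdia Hks HNI Hinv Hnd.
  assert (IH : forall c' h' ks', (miss Sg h' < m1 \/ (miss Sg h' <= m1 /\ weight c' < m2)) ->
    incl h h' -> incl ks ks' ->
    incl (diaargs c0) (diaargs c') ->
    (forall k, In k ks' -> In k ks0 \/ fresh Sg k) -> NI Sg c' h' ks' ->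
    (forall k, In k ks' -> AllN (NI Sg) k) -> ~ Dn (er (plug C (Node c' h' ks'))) ->
    exists t', Ext (Node c h ks) t' /\ Sat Sg (DsC C) t' /\ AllN (NI Sg) t' /\ ~ Dn (er (plug C t'))).
  { intros c' h' ks' Hm Hh Hks' H1 H2 H3 H4 H5.
    assert (G : exists t', Ext (Node c' h' ks') t' /\ Sat Sg (DsC C) t' /\ AllN (NI Sg) t' /\ ~ Dn (er (plug C t'))).
    { destruct Hm as [Hm|[Hm Hm']].
      - eapply IH1; eauto.
      - destruct (Nat.eq_dec (miss Sg h') m1) as [E|E].
        + subst m1. eapply IH2; eauto.
        + eapply IH1; eauto. lia. }
    destruct G as [t' [G1 G2]]. exists t'; split; auto.
    eapply Ext_trans; eauto. constructor; auto. intros k Hk0; exists k; split; auto. apply Ext_refl. }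
  destruct HNI as [Hch [HhS HNIr]].
  assert (HNI : NI Sg c h ks) by (split; auto).
  assert (HcS : incl c Sg) by (eapply incl_tran; eauto).
  pose proof Hcl as Hcl'. destruct Hcl' as [ClA [ClO [ClB ClD]]].
  destruct (classic (exists B, In B (DsC C) /\ ~ In B h)) as [[B [HB1 HB2]]|Hno1].
  { assert (HBS : In B Sg) by (apply (DsC_Sg Sg C Hcl HC B HB1)).
    apply (IH (B :: c) (B :: h) ks).
    - left. subst. apply miss_strict; auto.
    - apply incl_tl, incl_refl.
    - apply incl_refl.
    - eapply incl_tran; eauto. apply incl_dia. intros D HD; right; auto.
    - auto.
    - eapply NI_step; eauto.
      + apply incl_tl, incl_refl.
      + apply incl_refl.
      + apply incl_cons; [left; auto|]. apply incl_tl; auto.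
      + apply incl_cons; auto.
      + intros Y [HY|HY]; [right; left; auto|left; auto].
      + intros Y HY; left; right; auto.
    - auto.
    - apply (step_deliver C c h ks B (B :: h) HB1 Hnd). }
  destruct (classic (exists A B, In (And A B) c)) as [[A [B HAB]]|Hno2].
  { destruct (in_split _ _ HAB) as [c1 [c2 Ec]].
    assert (HABS : In (And A B) Sg) by auto.
    assert (Gen : forall X, (X = A \/ X = B) ->
      ~ Dn (er (plug C (Node (X :: c1 ++ c2) (X :: h) ks))) ->
      exists t', Ext (Node c h ks) t' /\ Sat Sg (DsC C) t' /\ AllN (NI Sg) t' /\ ~ Dn (er (plug C t'))).
    { intros X HX HnX. apply (IH (X :: c1 ++ c2) (X :: h) ks).
      - right. split.
        + subst m1. apply miss_mono, incl_tl, incl_refl.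
        + subst m2 c. rewrite weight_cons, !weight_app, weight_cons. simpl.
          destruct HX; subst; lia.
      - apply incl_tl, incl_refl.
      - apply incl_refl.
      - eapply incl_tran; eauto. apply incl_dia. intros D HD. right.
        subst c. apply in_app_or in HD; apply in_or_app. destruct HD as [HD|[HD|HD]]; auto. discriminate.
      - auto.
      - eapply NI_step; eauto.
        + apply incl_tl, incl_refl.
        + apply incl_refl.
        + apply incl_cons; [left; auto|]. apply incl_tl. eapply incl_tran; [|exact Hch].
          subst c. intros Y HY; apply in_app_or in HY; apply in_or_app; simpl; tauto.
        + apply incl_cons; auto. destruct (ClA A B HABS); destruct HX; subst; auto.
        + intros Y [HY|HY]; [right; left; auto|left; auto].
        + intros Y HY. subst c. apply in_app_or in HY. destruct HY as [HY|[HY|HY]].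
          * left; right; apply in_or_app; auto.
          * right; subst; simpl. destruct HX; subst; auto.
          * left; right; apply in_or_app; auto.
      - auto.
      - auto. }
    subst c. destruct (step_and C c1 c2 A B h ks (A :: h) (B :: h) Hnd) as [H|H].
    - apply (Gen A); auto.
    - apply (Gen B); auto. }
  destruct (classic (exists A B, In (Or A B) c)) as [[A [B HAB]]|Hno3].
  { destruct (in_split _ _ HAB) as [c1 [c2 Ec]].
    assert (HABS : In (Or A B) Sg) by auto.
    apply (IH (A :: B :: c1 ++ c2) (A :: B :: h) ks).
    - right. split.
      + subst m1. apply miss_mono. intros Y HY; simpl; auto.
      + subst m2 c. rewrite !weight_cons, !weight_app, weight_cons. simpl. lia.
    - intros Y HY; simpl; auto.
    - apply incl_refl.
    - eapply incl_tran; eauto. apply incl_dia. intros D HD. right; right.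
      subst c. apply in_app_or in HD; apply in_or_app. destruct HD as [HD|[HD|HD]]; auto. discriminate.
    - auto.
    - eapply NI_step; eauto.
      + intros Y HY; simpl; auto.
      + apply incl_refl.
      + intros Y [HY|[HY|HY]]; [subst Y; simpl; auto|subst Y; simpl; auto|]. right; right. apply Hch.
        rewrite Ec. apply in_app_or in HY; apply in_or_app; simpl; tauto.
      + destruct (ClO A B HABS). intros Y [HY|[HY|HY]]; [subst Y; auto|subst Y; auto|auto].
      + intros Y [HY|[HY|HY]]; [right; left; auto|right; right; left; auto|left; auto].
      + intros Y HY. subst c. apply in_app_or in HY. destruct HY as [HY|[HY|HY]].
        * left; right; right; apply in_or_app; auto.
        * right; subst; simpl; auto.
        * left; right; right; apply in_or_app; auto.
    - auto.
    - subst c. apply (step_or C c1 c2 A B h ks (A :: B :: h) Hnd). }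
  destruct (classic (exists A, In (Box A) c)) as [[A HA]|Hno4].
  { destruct (in_split _ _ HA) as [c1 [c2 Ec]].
    assert (HAS : In (Box A) Sg) by auto.
    destruct (ClB A HAS) as [HAS1 HAS2].
    set (fk := Node [Dia (neg A); A] [Dia (neg A); A] []).
    apply (IH (c1 ++ c2) h (ks ++ [fk])).
    - right. split.
      + lia.
      + subst m2 c. rewrite !weight_app, weight_cons. simpl. lia.
    - apply incl_refl.
    - apply incl_appl, incl_refl.
    - eapply incl_tran; eauto. apply incl_dia. intros D HD.
      subst c. apply in_app_or in HD; apply in_or_app. destruct HD as [HD|[HD|HD]]; auto. discriminate.
    - intros k Hk0. apply in_app_or in Hk0. destruct Hk0 as [Hk0|[Hk0|[]]]; auto.
      right. exists A; subst; auto.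
    - eapply NI_step; eauto.
      + apply incl_refl.
      + apply incl_appl, incl_refl.
      + eapply incl_tran; [|exact Hch]. subst c. intros Y HY; apply in_app_or in HY; apply in_or_app; simpl; tauto.
      + intros Y HY. subst c. apply in_app_or in HY. destruct HY as [HY|[HY|HY]].
        * left; apply in_or_app; auto.
        * right; subst; simpl. exists fk. split; [apply in_or_app; right; left; auto|simpl; auto].
        * left; apply in_or_app; auto.
    - intros k Hk0. apply in_app_or in Hk0. destruct Hk0 as [Hk0|[Hk0|[]]]; auto.
      subst k. constructor. apply NI_refl. intros Y [HY|[HY|[]]]; subst; auto.
      intros k [].
    - subst c. apply (step_box C c1 c2 A h ks h [Dia (neg A); A] Hnd). }
  destruct (kids_loop Sg C c h ks [] (Hk c h ks Hdia Hks) HC HcS Hinv Hnd) as [r' [K1 [K2 K3]]].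
  exists (Node c h r'). split; [|split; [|split]].
  - constructor. apply incl_refl. auto.
  - constructor.
    + intros A B H; apply Hno2; eauto.
    + intros A B H; apply Hno3; eauto.
    + intros A H; apply Hno4; eauto.
    + intros B HB. apply NNPP; intros HB2; apply Hno1; eauto.
    + intros a Ha1 Ha2. apply Hnd. apply (step_id C c h ks (Atom a)).
      * destruct HNIr as [_ [_ [_ [_ [H7 _]]]]]; auto.
      * destruct HNIr as [_ [_ [_ [_ [_ H8]]]]]; simpl; auto.
    + eapply NI_kids; eauto.
    + intros k Hk0; apply K2; auto.
  - constructor. eapply NI_kids; eauto. intros k Hk0; apply K2; auto.
  - auto.
Qed.

Lemma claim : forall Sg, closed Sg -> forall m1 m2 C t,
  length Sg - cnt Sg (DsC C ++ diaargs (cur t)) = m1 -> size t = m2 -> Pc Sg C t.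
Proof.
  intros Sg Hcl m1; induction m1 as [m1 IH1] using (well_founded_induction lt_wf).
  intros m2; induction m2 as [m2 IH2] using (well_founded_induction lt_wf).
  intros C [c0 h0 ks0] E1 E2 HC Hinv Hnd.
  inversion Hinv as [c h ks HNI Hkinv]; subst.
  apply (local_loop Sg C c0 ks0 Hcl HC) with (m1 := miss Sg h0) (m2 := weight c0); auto.
  - intros c h ks Hd Hks k Hk l r. destruct (Hks k Hk) as [Hk0|[A [HA Ek]]].
    + set (m1' := length Sg - cnt Sg (DsC (C ++ [Fr c h l r]) ++ diaargs (cur k))).
      assert (Hle : m1' <= length Sg - cnt Sg (DsC C ++ diaargs (cur (Node c0 h0 ks0)))).
      { unfold m1'. assert (cnt Sg (DsC C ++ diaargs c0) <= cnt Sg (DsC (C ++ [Fr c h l r]) ++ diaargs (cur k))).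
        { apply cnt_mono. rewrite DsC_app. rewrite <- app_assoc. apply incl_app.
          apply incl_appl, incl_refl. apply incl_appr, incl_appl; auto. }
        simpl; lia. }
      assert (Hsz : size k < size (Node c0 h0 ks0)) by (apply size_kid; auto).
      destruct (Nat.eq_dec m1' (length Sg - cnt Sg (DsC C ++ diaargs (cur (Node c0 h0 ks0))))) as [E|E].
      * eapply IH2; eauto.
      * eapply IH1; [|reflexivity|reflexivity]. lia.
    + subst k. intros HC' Hinv' Hnd'.
      destruct (classic (In (neg A) (DsC (C ++ [Fr c h l r])))) as [Hin|Hnin].
      * exfalso. apply (step_deliver _ _ _ _ (neg A) [] Hin Hnd').
        apply step_id with (A := A); simpl; auto.
      * pose proof Hcl as [_ [_ [ClB ClD]]]. destruct (ClB A HA) as [HA1 HA2].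
        assert (cnt Sg (DsC C ++ diaargs c0) <= cnt Sg (DsC (C ++ [Fr c h l r]))).
        { apply cnt_mono. rewrite DsC_app. apply incl_app. apply incl_appl, incl_refl. apply incl_appr; auto. }
        assert (cnt Sg (DsC (C ++ [Fr c h l r])) < cnt Sg (DsC (C ++ [Fr c h l r]) ++ diaargs [Dia (neg A); A])).
        { apply cnt_strict with (x := neg A); auto. apply incl_appl, incl_refl.
          apply in_or_app; right. apply in_diaargs; simpl; auto. }
        pose proof (cnt_le Sg (DsC (C ++ [Fr c h l r]) ++ diaargs [Dia (neg A); A])).
        eapply IH1; [|reflexivity|reflexivity|auto|auto|auto]. simpl cur. lia.
  - apply incl_refl.
Qed.

Inductive Desc : tree -> tree -> Prop :=
| Desc1 : forall t u, In u (kids t) -> Desc t u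
| Desc2 : forall t u v, In u (kids t) -> Desc u v -> Desc t v.

Lemma Desc_trans : forall x y z, Desc x y -> Desc y z -> Desc x z.
Proof. intros x y z H; induction H; intros; eapply Desc2; eauto. Qed.

Lemma Desc_size : forall t u, Desc t u -> size u < size t.
Proof.
  intros t u H; induction H; destruct t; simpl in H; [apply size_kid; auto|].
  pose proof (size_kid l l0 l1 u H); lia.
Qed.

Lemma Desc_wf : well_founded (fun x y => Desc y x).
Proof.
  apply (wf_incl _ _ (fun x y => size x < size y)).
  - intros x y H; apply Desc_size; auto.
  - apply (well_founded_ltof tree size).
Qed.

Definition Vm (a : nat) (u : tree) : Prop := In (NAtom a) (hist u).

Lemma Sat_desc : forall Sg t v, Desc t v -> forall Ds, Sat Sg Ds t ->
  exists Ds', Sat Sg Ds' v /\ incl (Ds ++ diaargs (cur t)) Ds'.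
Proof.
  intros Sg t v H; induction H; intros Ds HS.
  - inversion HS; subst. simpl in *. exists (Ds ++ diaargs c). split; auto. apply incl_refl.
  - inversion HS; subst. simpl in *. destruct (IHDesc (Ds ++ diaargs c)) as [Ds' [Q1 Q2]]; auto.
    exists Ds'; split; auto. eapply incl_tran; [|exact Q2]. apply incl_appl, incl_refl.
Qed.

Lemma truth : forall F Sg Ds u, Sat Sg Ds u -> In F (hist u) -> ~ forces Desc Vm u F.
Proof.
  induction F; intros Sg Ds u HS HF; pose proof HS as HS0; destruct HS0 as [Ds0 c h ks K1 K2 K3 K4 K5 HNI K7];
    simpl in *; destruct HNI as [N1 [N2 [N3 [N4 [N5 [N6 [N7 N8]]]]]]].
  - intros HV. unfold Vm in HV; simpl in HV. eauto.
  - intros HV. apply HV. unfold Vm; simpl; auto.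
  - intros [HA HB]. destruct (N3 _ _ HF) as [HH|[HH|HH]]; [eapply K1; eauto | | ].
    + eapply IHF1; eauto.
    + eapply IHF2; eauto.
  - intros HAB. destruct (N4 _ _ HF) as [HH|[HH1 HH2]]; [eapply K2; eauto|].
    destruct HAB; [eapply IHF1| eapply IHF2]; eauto.
  - intros HB. destruct (N5 _ HF) as [HH|[k [Hk Hk2]]]; [eapply K3; eauto|].
    eapply IHF; [apply K7; exact Hk | exact Hk2 | ]. apply HB. apply Desc1; auto.
  - intros [v [Hv Hf]]. destruct (Sat_desc Sg _ v Hv _ HS) as [Ds' [S1 S2]].
    eapply IHF; [exact S1| |exact Hf]. inversion S1; subst. simpl. match goal with H : incl Ds' _ |- _ => apply H end. apply S2.
    apply in_or_app; right; simpl. apply in_diaargs; auto.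
Qed.

Lemma link : forall t t' Sg Ds, Ext t t' -> Sat Sg Ds t' -> AllN (NI Sg) t ->
  ~ strue Desc Vm t' (er t).
Proof.
  intros t; induction t as [c h ks IH] using tree_ind2; intros t' Sg Ds HE HS HI Ht.
  inversion HE as [c1 h1 ks1 c' h' ks' Eh Ek]; subst. inversion HI as [c2 h2 ks2 HNI Hk]; subst.
  rewrite er_node in Ht. apply strue_app in Ht. destruct Ht as [Ht|Ht].
  - unfold strue in Ht. apply Exists_exists in Ht. destruct Ht as [x [Hx Hxt]].
    apply in_map_iff in Hx. destruct Hx as [A [EA HA]]; subst x.
    simpl in Hxt. eapply truth; eauto. simpl. apply Eh. apply HNI. auto.
  - unfold strue in Ht. apply Exists_exists in Ht. destruct Ht as [x [Hx Hxt]].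
    apply in_map_iff in Hx. destruct Hx as [k [Ekx Hkk]]; subst x.
    unfold erk in Hxt. rewrite itrue_IB in Hxt.
    destruct (Ek k Hkk) as [k' [Hk' Ekk]].
    inversion HS; subst.
    eapply (IH k Hkk k'); eauto. apply Hxt. apply Desc1; simpl; auto.
Qed.

Fixpoint tforms (t : tree) : list form :=
  match t with Node c _ ks => c ++ (fix go (l : list tree) : list form :=
     match l with [] => [] | k :: l' => tforms k ++ go l' end) ks end.

Lemma tforms_node : forall c h ks, incl c (tforms (Node c h ks)) /\
  forall k, In k ks -> incl (tforms k) (tforms (Node c h ks)).
Proof.
  intros c h ks; split.
  - simpl. apply incl_appl, incl_refl.
  - intros k Hk. simpl. apply incl_appr. induction ks as [|k' ks IH]; [destruct Hk|].
    destruct Hk as [Hk|Hk]; [subst; apply incl_appl, incl_refl|]. apply incl_appr; auto.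
Qed.

Definition Qex (s : sequent) := exists t, seq_equiv (er t) s /\ AllN (fun c h _ => c = h) t.

Lemma tree_exists_item : forall i l, Qex l -> Qex (i :: l).
Proof.
  apply (item_ind2 (fun i => forall l, Qex l -> Qex (i :: l)) Qex).
  - intros A l [t [Ht Ha]].
    destruct t as [c h ks]. inversion Ha as [? ? ? Ech Hk]; subst.
    exists (Node (A :: h) (A :: h) ks). split.
    + rewrite er_node; simpl. apply se_cons. exact Ht.
    + constructor; auto.
  - intros s' [t1 [Ht1 Ha1]] l [t [Ht Ha]].
    destruct t as [c h ks]. inversion Ha as [? ? ? Ech Hk]; subst.
    exists (Node h h (t1 :: ks)). split.
    + rewrite er_node; rewrite er_node in Ht. simpl.
      eapply se_trans. apply se_perm. apply Permutation_sym. apply Permutation_middle.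
      constructor; auto.
    + constructor; auto. intros k [Hk0|Hk0]; [subst; auto|auto].
  - exists (Node [] [] []). split; [constructor|]. constructor; auto. intros k [].
  - intros i l Hi Hl; apply Hi; auto.
Qed.

Lemma tree_exists : forall s, Qex s.
Proof.
  induction s as [|i l IH].
  - exists (Node [] [] []). split; [constructor|]. constructor; auto. intros k [].
  - apply tree_exists_item; auto.
Qed.

Fixpoint subs (A : form) : list form :=
  A :: match A with
       | And A1 A2 | Or A1 A2 => subs A1 ++ subs A2
       | Box A1 | Dia A1 => subs A1
       | _ => []
       end.

Lemma subs_self : forall A, In A (subs A).
Proof. destruct A; simpl; auto. Qed.

Lemma subs_trans : forall X Y, In Y (subs X) -> incl (subs Y) (subs X).
Proof.
  induction X; simpl; intros Y H; destruct H as [H|H]; try (subst; apply incl_refl); try tauto.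
  - apply in_app_or in H; destruct H as [H|H]; [apply IHX1 in H|apply IHX2 in H];
      eapply incl_tran; eauto; apply incl_tl; auto using incl_appl, incl_appr, incl_refl.
  - apply in_app_or in H; destruct H as [H|H]; [apply IHX1 in H|apply IHX2 in H];
      eapply incl_tran; eauto; apply incl_tl; auto using incl_appl, incl_appr, incl_refl.
  - apply IHX in H; apply incl_tl; auto.
  - apply IHX in H; apply incl_tl; auto.
Qed.

Definition cl (B : form) : list form := subs B ++ map neg (subs B).

Lemma closed_cl : forall L, closed (flat_map cl L).
Proof.
  intros L.
  assert (Sub : forall X Y, In Y (subs X) -> forall Z, In Z (subs Y) -> In Z (subs X))
    by (intros X Y H Z HZ; apply (subs_trans X Y H); auto).
  assert (Mem : forall Z, In Z (flat_map cl L) <-> exists X, In X L /\ (In Z (subs X) \/ exists Y, In Y (subs X) /\ Z = neg Y)).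
  { intros Z; rewrite in_flat_map; split.
    - intros [X [HX HZ]]; exists X; split; auto. unfold cl in HZ; apply in_app_or in HZ.
      destruct HZ as [HZ|HZ]; auto. apply in_map_iff in HZ. destruct HZ as [Y [E HY]]; right; eauto.
    - intros [X [HX [HZ|[Y [HY E]]]]]; exists X; split; auto; unfold cl; apply in_or_app; auto.
      right; apply in_map_iff; eauto. }
  unfold closed; split; [|split; [|split]].
  - intros A B H0; split; apply Mem in H0; destruct H0 as [X [HX [H|[Y [HY E]]]]].
    + apply Mem; exists X; split; auto; left; apply (Sub X (And A B) H); simpl; right; apply in_or_app; left; apply subs_self.
    + destruct Y; simpl in E; inversion E; subst.
      apply Mem; exists X; split; auto; right; exists Y1; split; auto. apply (Sub X _ HY); simpl; right; apply in_or_app; left; apply subs_self.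
    + apply Mem; exists X; split; auto; left; apply (Sub X (And A B) H); simpl; right; apply in_or_app; right; apply subs_self.
    + destruct Y; simpl in E; inversion E; subst.
      apply Mem; exists X; split; auto; right; exists Y2; split; auto. apply (Sub X _ HY); simpl; right; apply in_or_app; right; apply subs_self.
  - intros A B H0; split; apply Mem in H0; destruct H0 as [X [HX [H|[Y [HY E]]]]].
    + apply Mem; exists X; split; auto; left; apply (Sub X (Or A B) H); simpl; right; apply in_or_app; left; apply subs_self.
    + destruct Y; simpl in E; inversion E; subst.
      apply Mem; exists X; split; auto; right; exists Y1; split; auto. apply (Sub X _ HY); simpl; right; apply in_or_app; left; apply subs_self.
    + apply Mem; exists X; split; auto; left; apply (Sub X (Or A B) H); simpl; right; apply in_or_app; right; apply subs_self.
    + destruct Y; simpl in E; inversion E; subst.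
      apply Mem; exists X; split; auto; right; exists Y2; split; auto. apply (Sub X _ HY); simpl; right; apply in_or_app; right; apply subs_self.
  - intros A H0; split; apply Mem in H0; destruct H0 as [X [HX [H|[Y [HY E]]]]].
    + apply Mem; exists X; split; auto; right; exists (Box A); split; auto.
    + destruct Y; simpl in E; inversion E; subst.
      apply Mem; exists X; split; auto; left. rewrite neg_inv. auto.
    + apply Mem; exists X; split; auto; left; apply (Sub X (Box A) H); simpl; right; apply subs_self.
    + destruct Y; simpl in E; inversion E; subst.
      apply Mem; exists X; split; auto; right; exists Y; split; auto. apply (Sub X _ HY); simpl; right; apply subs_self.
  - intros A H0; apply Mem in H0; destruct H0 as [X [HX [H|[Y [HY E]]]]].
    + apply Mem; exists X; split; auto; left; apply (Sub X (Dia A) H); simpl; right; apply subs_self.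
    + destruct Y; simpl in E; inversion E; subst.
      apply Mem; exists X; split; auto; right; exists Y; split; auto. apply (Sub X _ HY); simpl; right; apply subs_self.
Qed.

Lemma incl_cl : forall L, incl L (flat_map cl L).
Proof. intros L x Hx. apply in_flat_map. exists x; split; auto. unfold cl; apply in_or_app; left; apply subs_self. Qed.

Lemma init_inv : forall Sg t, AllN (fun c h _ => c = h) t -> incl (tforms t) Sg -> AllN (NI Sg) t.
Proof.
  intros Sg t; induction t as [c h ks IH] using tree_ind2; intros Ha Hs.
  inversion Ha as [? ? ? E Hk]; subst. destruct (tforms_node h h ks) as [T1 T2].
  constructor. apply NI_refl. eapply incl_tran; eauto.
  intros k Hk0. apply IH; auto. eapply incl_tran; [apply T2|]; eauto.
Qed.

Theorem mainTheorem12 : forall S : sequent, derivable true S -> derivable false S.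
Proof.
  intros S HS. apply NNPP; intros Hn.
  destruct (tree_exists S) as [t [Het Hall]].
  set (Sg := flat_map cl (tforms t)).
  assert (Hcl : closed Sg) by apply closed_cl.
  assert (Hinv : AllN (NI Sg) t) by (apply init_inv; auto; apply incl_cl).
  assert (Hnd : ~ Dn (er (plug [] t))).
  { simpl. intros H. apply Hn. eapply D_eq; eauto. }
  destruct (claim Sg Hcl _ _ [] t eq_refl eq_refl (fun F H => match H with end) Hinv Hnd)
    as [t' [E [Sa _]]].
  apply (link t t' Sg [] E Sa Hinv).
  apply (se_true S (er t) (se_sym _ _ Het)).
  apply (soundness true S HS tree Desc Vm Desc_trans Desc_wf t').
Qed.
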